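(* Let $\mathbb{F}$ be a field of characteristic $2$. For every $w\in W^{(2)}$ there is a cycle in $\widetilde H_3(\mathbb{F})$ whose voltage with respect to $\ell$ equals $w$.
   Context: Let $V=\mathbb{F}^4$, $V^*$ its dual. $\widetilde H_3(\mathbb{F})$ is the graph whose vertices are tensors $v\otimes f\in V\otimes V^*$ with $f(v)\neq0$, with $v\otimes f\perp w\otimes g$ iff $f(w)=g(v)=0$. Let $W=\bigwedge^2V$, fix an isomorphism $\chi:\bigwedge^4V\to\mathbb{F}$, identify $\bigwedge^2V^*$ with $(\bigwedge^2V)^*$ via $(f_1\wedge f_2)(v_1\wedge v_2)=f_1(v_1)f_2(v_2)-f_1(v_2)f_2(v_1)$, let $\psi:\bigwedge^2V\to\bigwedge^2V^*$ be $\psi(\hat w)(\hat v)=\chi(\hat v\wedge\hat w)$ and $\phi=\psi^{-1}$. $S_2(W)$ is the symmetric square of $W$ (product $ab$, $a^2=aa$), and $W^{(2)}=\langle\hat w^2:\hat w\in W\rangle$. $\ell$ assigns to the dart from $v_1\otimes h_1$ to $v_2\otimes h_2$ the element $h_1(v_1)^{-1}h_2(v_2)^{-1}(v_1\wedge v_2)\,\phi(h_1\wedge h_2)$ of $S_2(W)$; the voltage of a cycle is the sum of the voltages of its darts. *)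

(* Defs.v *)
From HB Require Import structures.
From mathcomp Require Import all_boot all_order all_algebra.
From mathcomp Require Import mpoly.
From mathcomp Require Import ring.
Set Implicit Arguments. Unset Strict Implicit. Unset Printing Implicit Defensive.
Import Order.TTheory GRing.Theory Num.Theory.
Local Open Scope ring_scope.

(* V = F^4 : row vectors 'rV[F]_4 (coordinates in the standard basis e_0..e_3).
   V^* = F^4 : row vectors, coordinates in the dual basis e_0^*..e_3^*.
   W = /\^2 V : 'rV[F]_6, coordinates in the basis e_i/\e_j (i<j), ordered
     lexicographically: (01),(02),(03),(12),(13),(23).
   /\^2 V^* : 'rV[F]_6, coordinates in the basis e_i^*/\e_j^* (i<j), same order.
     Under the identification of the paper,
     (f1/\f2)(v1/\v2) = f1(v1)f2(v2) - f1(v2)f2(v1),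
     the basis e_i^*/\e_j^* is the dual basis of e_i/\e_j, so the functional
     attached to xi is  w |-> \sum_k xi_k w_k  (see lemma [evalW_wedge]).
   /\^4 V is 1-dimensional with basis e_0/\e_1/\e_2/\e_3; chi is the
     isomorphism sending this basis vector to a nonzero scalar c.
   S(W) = polynomial ring F[X_0..X_5] on the basis of W; S_2(W) is its
     homogeneous degree-2 part, and the symmetric product ab is the
     polynomial product. *)

Definition pidx (k : 'I_6) : 'I_4 * 'I_4 :=
  nth (inord 0, inord 0)
    [:: (inord 0, inord 1); (inord 0, inord 2); (inord 0, inord 3);
        (inord 1, inord 2); (inord 1, inord 3); (inord 2, inord 3)] k.

Section Defs.
Variable F : fieldType.

Definition pairing (f v : 'rV[F]_4) : F := \sum_(i < 4) f 0 i * v 0 i.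

Definition wedge2 (x y : 'rV[F]_4) : 'rV[F]_6 :=
  \row_k (x 0 (pidx k).1 * y 0 (pidx k).2 - x 0 (pidx k).2 * y 0 (pidx k).1).

Definition evalW (xi w : 'rV[F]_6) : F := \sum_(k < 6) xi 0 k * w 0 k.

(* coefficient of e_0/\e_1/\e_2/\e_3 in x /\ y, for x y in /\^2 V *)
Definition top (x y : 'rV[F]_6) : F :=
  x 0 (inord 0) * y 0 (inord 5) - x 0 (inord 1) * y 0 (inord 4)
  + x 0 (inord 2) * y 0 (inord 3) + x 0 (inord 3) * y 0 (inord 2)
  - x 0 (inord 4) * y 0 (inord 1) + x 0 (inord 5) * y 0 (inord 0).

Definition chi (c : F) (t : F) : F := c * t.

Definition basisW (k : 'I_6) : 'rV[F]_6 := \row_j (j == k)%:R.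

(* psi(w) in /\^2 V^* (dual-basis coordinates): psi(w)(v) = chi(v /\ w) *)
Definition psi (c : F) (w : 'rV[F]_6) : 'rV[F]_6 :=
  \row_k chi c (top (basisW k) w).

Definition psimx (c : F) : 'M[F]_6 := \matrix_(i, j) psi c (basisW i) 0 j.

Definition phi (c : F) (xi : 'rV[F]_6) : 'rV[F]_6 := xi *m invmx (psimx c).

Definition lin (w : 'rV[F]_6) : {mpoly F[6]} := \sum_(k < 6) w 0 k *: 'X_k.

(* vertices of H~_3(F): represented by pairs (v, f), standing for v (x) f *)
Definition tensor (a : 'rV[F]_4 * 'rV[F]_4) : 'M[F]_4 := a.1^T *m a.2.
Definition is_vertex (a : 'rV[F]_4 * 'rV[F]_4) : bool := pairing a.2 a.1 != 0.
Definition adj (a b : 'rV[F]_4 * 'rV[F]_4) : bool :=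
  (pairing a.2 b.1 == 0) && (pairing b.2 a.1 == 0).

Definition dart_voltage (c : F) (a b : 'rV[F]_4 * 'rV[F]_4) : {mpoly F[6]} :=
  ((pairing a.2 a.1)^-1 * (pairing b.2 b.1)^-1) *:
    (lin (wedge2 a.1 b.1) * lin (phi c (wedge2 a.2 b.2))).

Definition is_cycle (s : seq ('rV[F]_4 * 'rV[F]_4)) : Prop :=
  [/\ (3 <= size s)%N, all is_vertex s, uniq (map tensor s) & cycle adj s].

Definition voltage (c : F) (s : seq ('rV[F]_4 * 'rV[F]_4)) : {mpoly F[6]} :=
  \sum_(p <- zip s (rot 1 s)) dart_voltage c p.1 p.2.

Definition in_W2 (x : {mpoly F[6]}) : Prop :=
  exists s : seq (F * 'rV[F]_6), x = \sum_(p <- s) p.1 *: (lin p.2 ^+ 2).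

Lemma evalW_wedge (f1 f2 v1 v2 : 'rV[F]_4) :
  evalW (wedge2 f1 f2) (wedge2 v1 v2) =
  pairing f1 v1 * pairing f2 v2 - pairing f1 v2 * pairing f2 v1.
Proof.
have H (g : 'rV[F]_4) : exists a0 a1 a2 a3 : F,
    forall i : 'I_4, g 0 i = nth 0 [:: a0; a1; a2; a3] (val i).
  exists (g 0 (inord 0)), (g 0 (inord 1)), (g 0 (inord 2)), (g 0 (inord 3)).
  by case=> [[|[|[|[|n]]]] Hn] //=; congr (g 0 _); apply/val_inj; rewrite /= inordK.
have [a0 [a1 [a2 [a3 Ha]]]] := H f1.
have [b0 [b1 [b2 [b3 Hb]]]] := H f2.
have [c0 [c1 [c2 [c3 Hc]]]] := H v1.
have [d0 [d1 [d2 [d3 Hd]]]] := H v2.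
rewrite /evalW /pairing /wedge2 !big_ord_recr !big_ord0 /= !mxE /pidx /=.
rewrite !Ha !Hb !Hc !Hd /= !inordK //=.
ring.
Qed.
End Defs.

(* Main.v *)
Require Import Defs.
From HB Require Import structures.
From mathcomp Require Import all_boot all_order all_algebra.
From mathcomp Require Import mpoly.
From mathcomp Require Import ring.
Set Implicit Arguments. Unset Strict Implicit. Unset Printing Implicit Defensive.
Import Order.TTheory GRing.Theory Num.Theory.
Local Open Scope ring_scope.

Definition r4 (F : fieldType) (a0 a1 a2 a3 : F) : 'rV[F]_4 :=
  \row_(i < 4) nth 0 [:: a0; a1; a2; a3] i.
Definition r6 (F : fieldType) (a0 a1 a2 a3 a4 a5 : F) : 'rV[F]_6 :=
  \row_(i < 6) nth 0 [:: a0; a1; a2; a3; a4; a5] i.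

Lemma pairing_r4 (F : fieldType) (b0 b1 b2 b3 a0 a1 a2 a3 : F) :
  pairing (r4 b0 b1 b2 b3) (r4 a0 a1 a2 a3) = b0 * a0 + b1 * a1 + b2 * a2 + b3 * a3.
Proof. by rewrite /pairing !big_ord_recr big_ord0 /= !mxE /= add0r. Qed.

Lemma wedge2_r4 (F : fieldType) (x0 x1 x2 x3 y0 y1 y2 y3 : F) :
  wedge2 (r4 x0 x1 x2 x3) (r4 y0 y1 y2 y3) =
  r6 (x0 * y1 - x1 * y0) (x0 * y2 - x2 * y0) (x0 * y3 - x3 * y0)
     (x1 * y2 - x2 * y1) (x1 * y3 - x3 * y1) (x2 * y3 - x3 * y2).
Proof.
apply/rowP => k; rewrite !mxE /pidx.
by case: k => [[|[|[|[|[|[|k]]]]]] Hk] //=; rewrite ?mxE !inordK.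
Qed.

Lemma basisW_inord (F : fieldType) (l : 'I_6) k : (k < 6)%N ->
  basisW F l 0 (inord k) = (k == l)%:R.
Proof. by move=> hk; rewrite mxE -val_eqE /= inordK. Qed.

Definition tf (i l : nat) (F : fieldType) : F :=
  (0 == l)%N%:R * (5 == i)%N%:R - (1 == l)%N%:R * (4 == i)%N%:R
  + (2 == l)%N%:R * (3 == i)%N%:R + (3 == l)%N%:R * (2 == i)%N%:R
  - (4 == l)%N%:R * (1 == i)%N%:R + (5 == l)%N%:R * (0 == i)%N%:R.

Lemma psimxE (F : fieldType) (c : F) i l : psimx c i l = c * tf i l F.
Proof. rewrite /psimx /psi /chi /top !mxE -!val_eqE /= !inordK //; rewrite /tf. Qed.

Definition Kmx (F : fieldType) (c : F) : 'M[F]_6 :=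
  \matrix_(i, j) (if (val i + val j == 5)%N then (if (val i == 1)%N || (val i == 4)%N then - c^-1 else c^-1) else 0).

Lemma psimx_K (F : fieldType) (c : F) : c != 0 -> psimx c *m Kmx c = 1%:M.
Proof.
move=> c0; apply/matrixP => i j; rewrite !mxE.
rewrite !big_ord_recl big_ord0 !psimxE !mxE /=.
case: i => [[|[|[|[|[|[|i]]]]]] Hi] //; case: j => [[|[|[|[|[|[|j]]]]]] Hj] //=;
  rewrite /tf /= ?mulr0 ?mul0r ?mulr1 ?mul1r ?addr0 ?add0r ?subr0 ?sub0r ?mulrN ?mulNr ?opprK ?divff //; by field.
Qed.


Lemma invmx_psimx (F : fieldType) (c : F) : c != 0 -> invmx (psimx c) = Kmx c.
Proof.
move=> c0; have H := psimx_K c0.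
have [U _] := mulmx1_unit H.
by rewrite -[RHS]mul1mx -(mulVmx U) -mulmxA H mulmx1.
Qed.

Lemma phi_r6 (F : fieldType) (c z0 z1 z2 z3 z4 z5 : F) : c != 0 ->
  phi c (r6 z0 z1 z2 z3 z4 z5) =
  r6 (z5 / c) (- (z4 / c)) (z3 / c) (z2 / c) (- (z1 / c)) (z0 / c).
Proof.
move=> c0; rewrite /phi invmx_psimx //; apply/rowP => k; rewrite !mxE.
rewrite !big_ord_recl big_ord0 !mxE /=.
case: k => [[|[|[|[|[|[|k]]]]]] Hk] //=; ring.
Qed.

Definition X (F : fieldType) (k : nat) : {mpoly F[6]} := 'X_(inord k).
Lemma XE (F : fieldType) (i : 'I_6) : 'X_i = X F i.
Proof. by rewrite /X inord_val. Qed.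

Lemma lin_r6 (F : fieldType) (w0 w1 w2 w3 w4 w5 : F) :
  lin (r6 w0 w1 w2 w3 w4 w5) =
  w0 *: X F 0 + w1 *: X F 1 + w2 *: X F 2 + w3 *: X F 3 + w4 *: X F 4 + w5 *: X F 5.
Proof. by rewrite /lin !big_ord_recl big_ord0 !mxE !XE /= !addrA addr0. Qed.

Lemma sumX2 (F : fieldType) (f : nat -> F) :
  \sum_(k < 6) f k *: ('X_k : {mpoly F[6]}) ^+ 2 =
  f 0%N *: X F 0 ^+ 2 + f 1%N *: X F 1 ^+ 2 + f 2%N *: X F 2 ^+ 2 + f 3%N *: X F 3 ^+ 2
  + f 4%N *: X F 4 ^+ 2 + f 5%N *: X F 5 ^+ 2.
Proof. by rewrite !big_ord_recl big_ord0 !XE /= !addrA addr0. Qed.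

Lemma tensorE (F : fieldType) (a0 a1 a2 a3 b0 b1 b2 b3 : F) (i j : nat) :
  (i < 4)%N -> (j < 4)%N ->
  tensor (r4 a0 a1 a2 a3, r4 b0 b1 b2 b3) (inord i) (inord j) =
  nth 0 [:: a0; a1; a2; a3] i * nth 0 [:: b0; b1; b2; b3] j.
Proof. by move=> hi hj; rewrite /tensor !mxE big_ord1 !mxE !inordK. Qed.

Definition cyc (F : fieldType) (t : nat -> F) : seq ('rV[F]_4 * 'rV[F]_4) :=
  [:: (r4 1 0 0 0, r4 1 0 0 0);
     (r4 0 1 1 1, r4 0 0 1 0);
     (r4 0 1 0 1, r4 (t 4) 1 1 0);
     (r4 0 0 0 1, r4 0 1 1 1);
     (r4 0 0 1 1, r4 (t 5) 0 1 0);
     (r4 0 1 0 0, r4 0 1 0 0);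
     (r4 0 0 1 0, r4 0 0 1 0);
     (r4 0 1 0 0, r4 1 1 0 1);
     (r4 1 0 (t 3) 1, r4 0 0 0 1);
     (r4 1 0 0 0, r4 1 0 0 1);
     (r4 1 1 (t 1) 1, r4 0 0 0 1);
     (r4 1 1 0 0, r4 0 1 0 1);
     (r4 1 0 0 0, r4 1 1 (t 0) 0);
     (r4 0 0 0 1, r4 0 0 0 1);
     (r4 1 0 1 0, r4 0 1 1 0);
     (r4 0 1 1 (t 2), r4 0 1 0 0)].

Lemma eq_mod2 (R : comNzRingType) (a b q : R) : (2%:R : R) = 0 -> a = b + 2%:R * q -> a = b.
Proof. by move=> H ->; rewrite H mul0r addr0. Qed.

Lemma cyc_voltage (F : fieldType) (c : F) (t : nat -> F) :
  (2%:R : F) = 0 -> c != 0 ->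
  voltage c (cyc t) = \sum_(k < 6) (c^-1 * t k) *: ('X_k : {mpoly F[6]}) ^+ 2.
Proof.
move=> H2 c0.
have H2' : (2%:R : {mpoly F[6]}) = 0.
  by rewrite -mpolyC_nat H2 mpolyC0.
rewrite (sumX2 (fun n => c^-1 * t n)) /voltage /= !big_cons big_nil /dart_voltage /= !pairing_r4.
rewrite ?mul0r ?mulr0 ?mul1r ?mulr1 ?addr0 ?add0r ?invr1 ?mulr1 ?scale1r.
rewrite !wedge2_r4 !phi_r6 // !lin_r6.
move: (c^-1) => d; rewrite -!mul_mpolyC.
apply: (eq_mod2 (q := (2%:R) * (d)%:MP * X F 0 * X F 5 + - ((d * (t 1))%:MP * X F 1 * X F 1) + - ((2%:R) * (d)%:MP * X F 1 * X F 2) + - ((2%:R) * (d)%:MP * X F 1 * X F 4) + - ((d * (t 2))%:MP * X F 2 * X F 2) + (4%:R) * (d)%:MP * X F 2 * X F 3 + - ((d)%:MP * X F 2 * X F 5) + - ((d * (t 4))%:MP * X F 4 * X F 4) + (d * (t 4))%:MP * X F 4 * X F 5 + - ((d * (t 5))%:MP * X F 4 * X F 5)) H2').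
ring.
Qed.

Definition key (F : fieldType) (M : 'M[F]_4) : seq bool :=
  [:: M (inord 0) (inord 0) != 0; M (inord 0) (inord 1) != 0; M (inord 0) (inord 3) != 0;
      M (inord 1) (inord 1) != 0; M (inord 1) (inord 2) != 0; M (inord 1) (inord 3) != 0;
      M (inord 2) (inord 1) != 0; M (inord 2) (inord 2) != 0; M (inord 3) (inord 2) != 0;
      M (inord 3) (inord 3) != 0].

Lemma cyc_is_cycle (F : fieldType) (t : nat -> F) :
  (2%:R : F) = 0 -> is_cycle (cyc t).
Proof.
move=> H2; split.
idtac.
- by [].
- by rewrite /= /is_vertex /= !pairing_r4 ?mul0r ?mulr0 ?mul1r ?mulr1 ?addr0 ?add0r !oner_neq0.
- apply: (@map_uniq _ _ (@key F)).
  rewrite /cyc !map_cons /key !tensorE //; rewrite /= ?mul0r ?mulr0 ?mul1r ?mulr1 ?eqxx ?oner_neq0.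
  by [].
- rewrite /= /adj /= !pairing_r4 ?mul0r ?mulr0 ?mul1r ?mulr1 ?addr0 ?add0r ?eqxx /=.
  repeat (apply/andP; split); try done; apply/eqP; ring: H2.
Qed.

Lemma sqr_sum (R : comNzRingType) (I : Type) (r : seq I) (f : I -> R) :
  (2%:R : R) = 0 -> (\sum_(i <- r) f i) ^+ 2 = \sum_(i <- r) f i ^+ 2.
Proof.
move=> H2; elim: r => [|i r IH]; first by rewrite !big_nil expr0n.
by rewrite !big_cons sqrrD IH -mulr_natr H2 mulr0 addr0.
Qed.

Lemma W2_form (F : fieldType) (w : {mpoly F[6]}) : (2%:R : F) = 0 -> in_W2 w ->
  exists mu : nat -> F, w = \sum_(k < 6) mu k *: ('X_k : {mpoly F[6]}) ^+ 2.
Proof.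
move=> H2 [s ->].
have H2' : (2%:R : {mpoly F[6]}) = 0 by rewrite -mpolyC_nat H2 mpolyC0.
exists (fun k => \sum_(p <- s) p.1 * (p.2 0 (inord k)) ^+ 2).
have E (v : 'rV[F]_6) : lin v ^+ 2 = \sum_(k < 6) (v 0 k) ^+ 2 *: ('X_k : {mpoly F[6]}) ^+ 2.
  by rewrite /lin sqr_sum //; apply: eq_bigr => k _; rewrite exprZn.
under eq_bigr => p _ do rewrite E scaler_sumr.
rewrite exchange_big /=; apply: eq_bigr => k _.
rewrite scaler_suml; apply: eq_bigr => p _.
by rewrite scalerA inord_val.
Qed.

Unset Implicit Arguments.

Theorem lemma3p12 (F : fieldType) (c : F) :
  2 \in [pchar F] -> c != 0 ->
  forall w : {mpoly F[6]}, in_W2 w ->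
  exists s : seq ('rV[F]_4 * 'rV[F]_4), is_cycle s /\ voltage c s = w.
Proof.
move=> Hp c0 w Hw.
have H2 : (2%:R : F) = 0 := pcharf0 Hp.
have [mu ->] := W2_form H2 Hw.
exists (cyc (fun k => c * mu k)); split; first exact: cyc_is_cycle.
rewrite cyc_voltage //; apply: eq_bigr => k _.
by rewrite mulKf.
Qed.
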